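(* Let $\operatorname{pend}(n)$ denote the number of partitions of $n$ in which no even part appears exactly once (i.e., each even part size that occurs has multiplicity at least $2$; odd parts are unrestricted), and let $\operatorname{pond}(n)$ denote the number of partitions of $n$ in which no odd part appears exactly once (i.e., each odd part size that occurs has multiplicity at least $2$; even parts are unrestricted). Then, as formal power series in $q$, $$\sum_{n\ge 0}(-1)^n \operatorname{pend}(n)q^n=\frac{f_1f_{12}}{f_2^2f_6},\qquad \sum_{n\ge 0}(-1)^n \operatorname{pond}(n)q^n=\frac{f_3f_4}{f_2^2f_6}.$$
   Context: For a positive integer $r$, $f_r:=(q^r;q^r)_\infty=\prod_{k\ge1}(1-q^{rk})$. By convention $\operatorname{pend}(0)=\operatorname{pond}(0)=1$. *)

(* Defs.v *)
From mathcomp Require Import all_boot all_order all_algebra.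
Set Implicit Arguments. Unset Strict Implicit. Unset Printing Implicit Defensive.
Import Order.TTheory GRing.Theory Num.Theory.
Local Open Scope ring_scope.

Definition series := nat -> int.

Definition smul (a b : series) : series :=
  fun n => \sum_(i < n.+1) a i * b (n - i)%N.

(* first n+1 coefficients of the multiplicative inverse of a series with
   constant term 1:  b_0 = 1,  b_n = - sum_{i<n} b_i a_{n-i} *)
Fixpoint sinv_seq (a : series) (n : nat) : seq int :=
  match n with
  | 0%N => [:: 1]
  | m.+1 => let s := sinv_seq a m in
            rcons s (- \sum_(i < m.+1) nth 0 s i * a (m.+1 - i)%N)
  end.

Definition sinv (a : series) : series := fun n => nth 0 (sinv_seq a n) n.

(* f_r = prod_{k>=1} (1 - q^{rk}); the coefficient of q^n (r >= 1) only depends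
   on the factors with k <= n. *)
Definition feta (r : nat) : series :=
  fun n => (\prod_(k < n) (1 - 'X^(r * k.+1)) : {poly int})`_n.

(* A partition of n is encoded by its multiplicity function: m i is the
   multiplicity of the part i+1 (parts and multiplicities are at most n). *)
Definition is_partition (n : nat) (m : {ffun 'I_n -> 'I_n.+1}) : bool :=
  (\sum_(i < n) i.+1 * m i)%N == n.

Definition pend (n : nat) : nat :=
  #|[set m : {ffun 'I_n -> 'I_n.+1} | is_partition m &
      [forall i : 'I_n, ~~ odd i.+1 ==> (val (m i) != 1%N)]]|.

Definition pond (n : nat) : nat :=
  #|[set m : {ffun 'I_n -> 'I_n.+1} | is_partition m &
      [forall i : 'I_n, odd i.+1 ==> (val (m i) != 1%N)]]|.

(* Main.v *)
Require Import Defs.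
From mathcomp Require Import all_boot all_order all_algebra.
From mathcomp Require Import ring zify.
Import Order.TTheory GRing.Theory Num.Theory.
Local Open Scope ring_scope.


Definition eqs (n : nat) (p q : {poly int}) := forall k, (k <= n)%N -> p`_k = q`_k.

Lemma eqs_refl n p : eqs n p p. Proof. by []. Qed.
Lemma eqs_sym n p q : eqs n p q -> eqs n q p.
Proof. by move=> h k hk; rewrite h. Qed.
Lemma eqs_trans n p q r : eqs n p q -> eqs n q r -> eqs n p r.
Proof. by move=> h1 h2 k hk; rewrite h1 // h2. Qed.

Lemma eqs_mul n p p' q q' : eqs n p p' -> eqs n q q' -> eqs n (p * q) (p' * q').
Proof.
move=> h1 h2 k hk; rewrite !coefM; apply: eq_bigr => j _.
have hj := ltn_ord j.
rewrite h1; last by lia.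
by rewrite h2 //; lia.
Qed.

Lemma eqs_add n p p' q q' : eqs n p p' -> eqs n q q' -> eqs n (p + q) (p' + q').
Proof. by move=> h1 h2 k hk; rewrite !coefD h1 // h2. Qed.

Lemma eqs_opp n p p' : eqs n p p' -> eqs n (- p) (- p').
Proof. by move=> h1 k hk; rewrite !coefN h1. Qed.

Lemma eqs_prod n (I : Type) (r : seq I) (P : pred I) (F G : I -> {poly int}) :
  (forall i, P i -> eqs n (F i) (G i)) ->
  eqs n (\prod_(i <- r | P i) F i) (\prod_(i <- r | P i) G i).
Proof.
move=> h; apply: (big_ind2 (eqs n)) => //.
by move=> *; apply: eqs_mul.
Qed.

Lemma eqs_Xn0 n e : (n < e)%N -> eqs n 'X^e 0.
Proof. move=> he k hk; rewrite coefXn coef0; case: eqP => //; lia. Qed.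

Lemma eqs_cancel n (p q t : {poly int}) : t`_0 = 1 -> eqs n (p * t) (q * t) -> eqs n p q.
Proof.
move=> t0 h.
have h' : forall k, (k <= n)%N -> (p - q)`_k = 0.
  elim/ltn_ind => k IH hk.
  have := h k hk; move/eqP; rewrite -subr_eq0 -coefB -mulrBl coefM big_ord_recr /=.
  rewrite subnn t0 mulr1 big1 ?add0r; first by move/eqP.
  move=> [j hj] _ /=; rewrite IH ?mul0r //; lia.
by move=> k hk; apply/eqP; rewrite -subr_eq0 -coefB h'.
Qed.

Lemma eqs_le n m (p q : {poly int}) : (m <= n)%N -> eqs n p q -> eqs m p q.
Proof. by move=> hm h k hk; apply: h; lia. Qed.

Lemma eqs_ext n (g : nat -> {poly int}) M M' : (M <= M')%N ->
  (forall k, (M <= k)%N -> eqs n (g k) 1) ->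
  eqs n (\prod_(0 <= k < M) g k) (\prod_(0 <= k < M') g k).
Proof.
move=> hM h; rewrite (big_cat_nat (leq0n M) hM) /=.
rewrite -{1}(mulr1 (\prod_(0 <= k < M) g k)); apply: eqs_mul => //.
apply: eqs_sym; rewrite big_nat_cond.
apply: (big_ind (fun x => eqs n x 1)) => //.
  by move=> x y hx hy; rewrite -(mulr1 1); apply: eqs_mul.
move=> i /andP [/andP [hi _] _]; exact: h.
Qed.

Lemma split2 (h : nat -> {poly int}) M :
  \prod_(0 <= k < M.*2) h k = \prod_(0 <= k < M) (h k.*2 * h k.*2.+1).
Proof.
elim: M => [|M IH]; first by rewrite !big_geq.
rewrite doubleS !big_nat_recr //= IH mulrA //; lia.
Qed.


Definition agree (a : series) (p : {poly int}) n := forall k, (k <= n)%N -> a k = p`_k.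

Lemma agree_smul a b (p q : {poly int}) n : agree a p n -> agree b q n -> agree (smul a b) (p * q) n.
Proof.
move=> h1 h2 k hk; rewrite /smul coefM; apply: eq_bigr => j _.
have hj := ltn_ord j.
rewrite h1; last by lia.
by rewrite h2 //; lia.
Qed.

Lemma agree_eqn a (p q : {poly int}) n : agree a p n -> eqs n p q -> agree a q n.
Proof. by move=> h1 h2 k hk; rewrite h1 // h2. Qed.

Lemma size_sinv_seq a m : size (sinv_seq a m) = m.+1.
Proof. by elim: m => //= m IH; rewrite size_rcons IH. Qed.

Lemma nth_sinv_seq a m i : (i <= m)%N -> nth 0 (sinv_seq a m) i = sinv a i.
Proof.
elim: m => [|m IH] hi; first by have -> : i = 0%N by lia.
case: (ltnP i m.+1) => hi'.
  by rewrite /= nth_rcons size_sinv_seq hi' IH.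
by have -> : i = m.+1 by lia.
Qed.

Lemma sinv0 a : sinv a 0 = 1. Proof. by []. Qed.

Lemma sinvS a m : sinv a m.+1 = - \sum_(i < m.+1) sinv a i * a (m.+1 - i)%N.
Proof.
rewrite /sinv /= nth_rcons size_sinv_seq ltnn eqxx; congr (- _).
apply: eq_bigr => i _; rewrite nth_sinv_seq //; have := ltn_ord i; lia.
Qed.

Definition trunc (a : series) n : {poly int} := \poly_(i < n.+1) a i.

Lemma agree_trunc a n : agree a (trunc a n) n.
Proof. by move=> k hk; rewrite coef_poly ltnS hk. Qed.

Lemma sinv_prop a p n : a 0%N = 1 -> agree a p n -> eqs n (trunc (sinv a) n * p) 1.
Proof.
move=> a0 h k hk.
rewrite -(@agree_smul (sinv a) a _ _ n (agree_trunc (sinv a) n) h k hk) coefC /smul.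
destruct k as [|k].
  by rewrite big_ord1 /= subnn a0 sinv0 mulr1.
rewrite big_ord_recr /= subnn a0 mulr1 sinvS addrC.
exact: addNr.
Qed.


Lemma coefNX w k : ((-'X : {poly int})^+w)`_k = if k == w then (-1)^+w else 0.
Proof.
have -> : (-'X : {poly int}) = 'X * (-1)%:P by rewrite polyCN polyC1 mulrN1.
rewrite exprMn -polyC_exp coefMC coefXn; case: eqP => _; by rewrite ?mul1r ?mul0r.
Qed.

Lemma eqs_NX n w : (n < w)%N -> eqs n ((-'X)^+w) 0.
Proof. move=> hw k hk; rewrite coefNX coef0; case: eqP => //; lia. Qed.

Lemma eqs_1m n (p : {poly int}) : eqs n p 0 -> eqs n (1 - p) 1.
Proof. move=> h; rewrite -[X in eqs _ _ X]subr0; apply: eqs_add => //; exact: eqs_opp. Qed.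

Definition Fr r M : {poly int} := \prod_(0 <= k < M) (1 - 'X^(r * k.+1)).

Lemma agree_feta r n M : (0 < r)%N -> (n <= M)%N -> agree (feta r) (Fr r M) n.
Proof.
move=> hr hM k hk; rewrite /feta -(big_mkord xpredT (fun k => 1 - 'X^(r * k.+1)) : _ = _ :> {poly int}).
have hkM : (k <= M)%N by lia.
apply: (@eqs_ext k (fun j => 1 - 'X^(r * j.+1)) k M hkM) => // j hj.
apply: eqs_1m; apply: eqs_Xn0; nia.
Qed.

Lemma eqs_Fr r n M M' : (0 < r)%N -> (n <= M)%N -> (n <= M')%N -> eqs n (Fr r M) (Fr r M').
Proof.
move=> hr h1 h2.
wlog le : M M' h1 h2 / (M <= M')%N.
  move=> W; case: (leqP M M') => h; first exact: W.
  apply: eqs_sym; apply: W => //; lia.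
apply: (@eqs_ext n (fun j => 1 - 'X^(r * j.+1)) M M' le) => j hj.
apply: eqs_1m; apply: eqs_Xn0; nia.
Qed.

Lemma coef0_prod (I : Type) (r : seq I) (P : pred I) (F : I -> {poly int}) :
  (forall i, P i -> (F i)`_0 = 1) -> (\prod_(i <- r | P i) F i)`_0 = 1.
Proof.
move=> h; apply: (big_ind (fun x : {poly int} => x`_0 = 1)) => //.
- by rewrite coef1.
- by move=> x y hx hy; rewrite coef0M hx hy mulr1.
Qed.

Lemma Fr0 r M : (0 < r)%N -> (Fr r M)`_0 = 1.
Proof.
move=> hr; apply: coef0_prod => k _; rewrite coefB coef1 coefXn.
case: eqP => //; lia.
Qed.

Definition Tn n : {poly int} := \prod_(0 <= i < n) (1 - (-'X)^+(i.+1)).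
Definition Ep (b : bool) n : {poly int} :=
  \prod_(0 <= i < n) (if odd i.+1 == b then 1 - (-'X)^+(i.+1) + ((-'X)^+(i.+1))^+2 else 1).

Lemma Tn0 n : (Tn n)`_0 = 1.
Proof. apply: coef0_prod => k _; by rewrite coefB coef1 coefNX. Qed.

Lemma NXodd k : (-'X : {poly int})^+(k.*2.+1) = - 'X^(k.*2.+1).
Proof. by rewrite exprNn -signr_odd /= odd_double /= expr1 mulN1r. Qed.
Lemma NXeven k : (-'X : {poly int})^+(k.*2) = 'X^(k.*2).
Proof. by rewrite exprNn -signr_odd /= odd_double /= expr0 mul1r. Qed.

Lemma Xe (a b c : nat) : a = (b * c)%N -> ('X^a : {poly int}) = 'X^b ^+ c.
Proof. by move=> ->; rewrite exprM. Qed.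

Lemma eq_eqs n (p q : {poly int}) : p = q -> eqs n p q.
Proof. by move=> ->. Qed.


Lemma eqs_Tn n : eqs n (Tn n) (Tn n.*2).
Proof.
apply: (@eqs_ext n (fun i => 1 - (-'X)^+(i.+1)) n n.*2) => [|j hj]; first lia.
apply: eqs_1m; apply: eqs_NX; lia.
Qed.

Lemma eqs_Ep b n : eqs n (Ep b n) (Ep b n.*2).
Proof.
apply: (@eqs_ext n (fun i => if odd i.+1 == b then 1 - (-'X)^+(i.+1) + ((-'X)^+(i.+1))^+2 else 1) n n.*2) => [|j hj]; first lia.
case: ifP => // _.
have hz : eqs n ((-'X)^+(j.+1)) 0 by apply: eqs_NX; lia.
apply: (@eqs_trans _ _ (1 - 0 + 0 * 0)); last by rewrite subr0 mulr0 addr0.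
apply: eqs_add; first by apply: eqs_add => //; apply: eqs_opp.
by rewrite expr2; apply: eqs_mul.
Qed.

Lemma id_a n : eqs n (Tn n * Fr 1 n * Fr 4 n) (Fr 2 n ^+ 3).
Proof.
apply: (@eqs_trans _ _ (Tn n.*2 * Fr 1 n.*2 * Fr 4 n)).
  apply: eqs_mul => //; apply: eqs_mul; first exact: eqs_Tn.
  apply: eqs_Fr => //; lia.
apply: (@eqs_trans _ _ (Fr 2 n * Fr 2 n * Fr 2 n.*2)); last first.
  rewrite exprS expr2 [X in eqs _ _ X]mulrC; apply: eqs_mul => //; apply: eqs_Fr => //; lia.
rewrite /Tn /Fr !split2 -!big_split /=; apply: eqs_prod => i _; apply: eq_eqs.
rewrite NXodd (NXeven i.+1) !mul1n.
have e1 : ('X^(4 * i.+1) : {poly int}) = 'X^(i.*2.+2) ^+ 2 by apply: Xe; lia.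
have e2 : ('X^(2 * i.+1) : {poly int}) = 'X^(i.*2.+2) by congr ('X^ _); lia.
have e3 : ('X^(2 * i.*2.+1) : {poly int}) = 'X^(i.*2.+1) ^+ 2 by apply: Xe; lia.
have e4 : ('X^(2 * i.*2.+2) : {poly int}) = 'X^(i.*2.+2) ^+ 2 by apply: Xe; lia.
rewrite e1 e2 e3 e4.
move: ('X^(i.*2.+1)) ('X^(i.*2.+2)) => x y.
ring.
Qed.

Lemma id_b n : eqs n (Ep false n * Fr 4 n * Fr 6 n) (Fr 2 n * Fr 12 n).
Proof.
apply: (@eqs_trans _ _ (Ep false n.*2 * Fr 4 n * Fr 6 n)).
  by apply: eqs_mul => //; apply: eqs_mul => //; apply: eqs_Ep.
rewrite /Ep /Fr !split2 -!big_split /=; apply: eqs_prod => i _; apply: eq_eqs.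
rewrite /= !odd_double /= (NXeven i.+1) mul1r.
have e1 : ('X^(4 * i.+1) : {poly int}) = 'X^(i.*2.+2) ^+ 2 by apply: Xe; lia.
have e2 : ('X^(2 * i.+1) : {poly int}) = 'X^(i.*2.+2) by congr ('X^ _); lia.
have e3 : ('X^(6 * i.+1) : {poly int}) = 'X^(i.*2.+2) ^+ 3 by apply: Xe; lia.
have e4 : ('X^(12 * i.+1) : {poly int}) = 'X^(i.*2.+2) ^+ 6 by apply: Xe; lia.
rewrite e1 e2 e3 e4.
move: ('X^(i.*2.+2)) => y.
ring.
Qed.

Lemma id_c n : eqs n (Ep true n * Fr 1 n * Fr 6 n) (Fr 2 n * Fr 3 n).
Proof.
apply: (@eqs_trans _ _ (Ep true n.*2 * Fr 1 n.*2 * Fr 6 n)).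
  apply: eqs_mul => //; apply: eqs_mul; first exact: eqs_Ep.
  apply: eqs_Fr => //; lia.
apply: (@eqs_trans _ _ (Fr 2 n * Fr 3 n.*2)); last first.
  apply: eqs_mul => //; apply: eqs_Fr => //; lia.
rewrite /Ep /Fr !split2 -!big_split /=; apply: eqs_prod => i _; apply: eq_eqs.
rewrite /= !odd_double /= NXodd !mul1n.
have e1 : ('X^(6 * i.+1) : {poly int}) = 'X^(i.*2.+2) ^+ 3 by apply: Xe; lia.
have e2 : ('X^(2 * i.+1) : {poly int}) = 'X^(i.*2.+2) by congr ('X^ _); lia.
have e3 : ('X^(3 * i.*2.+1) : {poly int}) = 'X^(i.*2.+1) ^+ 3 by apply: Xe; lia.
have e4 : ('X^(3 * i.*2.+2) : {poly int}) = 'X^(i.*2.+2) ^+ 3 by apply: Xe; lia.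
rewrite e1 e2 e3 e4.
move: ('X^(i.*2.+1)) ('X^(i.*2.+2)) => x y.
ring.
Qed.


Definition Sp (c : nat -> bool) n (i : nat) : {poly int} :=
  \sum_(m < n.+1) (if c i.+1 && (m == 1%N :> nat) then 0 else (-'X)^+(i.+1 * m)).
Definition Pp c n : {poly int} := \prod_(i < n) Sp c n i.

Lemma Pp_coef c n : (Pp c n)`_n = (-1)^+n *
  (#|[set m : {ffun 'I_n -> 'I_n.+1} | is_partition m &
      [forall i : 'I_n, c i.+1 ==> (val (m i) != 1%N)]]|)%:Z.
Proof.
rewrite /Pp /Sp bigA_distr_bigA /= coef_sum.
rewrite (eq_bigr (fun f : {ffun 'I_n -> 'I_n.+1} => if is_partition f && [forall i : 'I_n, c i.+1 ==> (val (f i) != 1%N)] then (-1)^+n else 0)).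
  rewrite -big_mkcond /= sumr_const cardsE -mulr_natr natz.
  by congr (_ * _%:Z); apply: eq_card => f; rewrite !inE.
move=> f _.
case: (boolP [forall i : 'I_n, c i.+1 ==> (val (f i) != 1%N)]) => hg.
  rewrite andbT (eq_bigr (fun i : 'I_n => (-'X)^+(i.+1 * f i))); last first.
    move=> i _; move/forallP: hg => /(_ i).
    by case: (c i.+1) => //= /negbTE ->.
  rewrite prodrXr coefNX /is_partition eq_sym.
  by case: eqP => // ->.
rewrite andbF.
move/forallPn: hg => [i]; rewrite negb_imply negbK => /andP [ci fi].
by rewrite (bigD1 i) //= ci fi /= mul0r coef0.
Qed.

Lemma geo (z : {poly int}) N : (\sum_(m < N) z^+m) * (1 - z) = 1 - z^+N.
Proof.
have := subrX1 z N => h.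
by rewrite mulrC -opprB mulNr -h opprB.
Qed.

Lemma zpow0 n i N : (n < i.+1 * N)%N -> eqs n (((-'X : {poly int})^+(i.+1))^+N) 0.
Proof. by move=> h; rewrite -exprM; apply: eqs_NX. Qed.

Lemma Sp_fac c n i : (i < n)%N ->
  eqs n (Sp c n i * (1 - (-'X)^+(i.+1)))
        (if c i.+1 then 1 - (-'X)^+(i.+1) + ((-'X)^+(i.+1))^+2 else 1).
Proof.
move=> hi; rewrite /Sp.
set z := (-'X : {poly int})^+(i.+1).
rewrite (eq_bigr (fun m : 'I_n.+1 => if c i.+1 && (m == 1%N :> nat) then 0 else z^+m)); last first.
  by move=> m _; rewrite /z exprM.
case: (c i.+1) => /=; last first.
  rewrite geo; apply: eqs_1m; apply: zpow0; nia.
case: n hi => [|n'] hi //.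
rewrite big_ord_recl big_ord_recl /=.
rewrite (eq_bigr (fun m : 'I_n' => z^+2 * z^+m)); last first.
  by move=> m _; rewrite -exprD /bump !leq0n !add1n.
rewrite -mulr_sumr expr0 add0r mulrDl -mulrA geo.
have h0 : eqs n'.+1 (z^+(2 + n')) 0 by apply: zpow0; nia.
apply: (@eqs_trans _ _ (1 - z + z^+2 - z^+(2 + n'))).
  by apply: eq_eqs; rewrite exprD; ring.
rewrite -[X in eqs _ _ X]subr0; apply: eqs_add => //; exact: eqs_opp.
Qed.


Lemma PpT c n : eqs n (Pp c n * Tn n)
  (\prod_(0 <= i < n) (if c i.+1 then 1 - (-'X)^+(i.+1) + ((-'X)^+(i.+1))^+2 else 1)).
Proof.
rewrite /Pp /Tn !big_mkord -big_split /=.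
by apply: eqs_prod => i _; apply: Sp_fac.
Qed.

Lemma Ep_c c b n : (forall j, c j = (odd j == b)) ->
  Ep b n = \prod_(0 <= i < n) (if c i.+1 then 1 - (-'X)^+(i.+1) + ((-'X)^+(i.+1))^+2 else 1).
Proof. by move=> h; apply: eq_bigr => i _; rewrite h. Qed.

Definition Fs : series := smul (smul (feta 2) (feta 2)) (feta 6).
Definition Fp n : {poly int} := Fr 2 n * Fr 2 n * Fr 6 n.

Lemma agree_Fs n : agree Fs (Fp n) n.
Proof. by apply: agree_smul; [apply: agree_smul|]; apply: agree_feta. Qed.

Lemma Fs0 : Fs 0%N = 1.
Proof. by rewrite (agree_Fs 0) // /Fp !coef0M !Fr0. Qed.

Lemma final (G' : series) (G P : {poly int}) n :
  agree G' G n -> eqs n (P * Fp n) G -> smul G' (sinv Fs) n = P`_n.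
Proof.
move=> hG key.
rewrite (@agree_smul _ _ _ _ _ hG (agree_trunc (sinv Fs) n) n) //.
have hQ := @sinv_prop Fs (Fp n) n Fs0 (agree_Fs n).
apply: (@eqs_trans n _ (P * Fp n * trunc (sinv Fs) n)).
  by apply: eqs_mul => //; apply: eqs_sym.
apply: (@eqs_trans n _ (P * 1)); last by rewrite mulr1.
rewrite -mulrA [X in eqs _ (_ * X) _]mulrC; apply: eqs_mul => //.
all: by [].
Qed.

Lemma key_pend n : eqs n (Pp (fun j => ~~ odd j) n * Fp n) (Fr 1 n * Fr 12 n).
Proof.
apply: (@eqs_cancel n _ _ (Tn n * Fr 4 n)); first by rewrite coef0M Tn0 Fr0.
apply: (@eqs_trans n _ ((Pp (fun j => ~~ odd j) n * Tn n) * Fr 4 n * Fr 6 n * (Fr 2 n * Fr 2 n))).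
  by apply: eq_eqs; rewrite /Fp; ring.
apply: (@eqs_trans n _ (Ep false n * Fr 4 n * Fr 6 n * (Fr 2 n * Fr 2 n))).
  apply: eqs_mul => //; apply: eqs_mul => //; apply: eqs_mul => //.
  rewrite (@Ep_c (fun j => ~~ odd j)); first exact: PpT.
  by move=> j; rewrite eqbF_neg.
apply: (@eqs_trans n _ ((Fr 2 n * Fr 12 n) * (Fr 2 n * Fr 2 n))).
  by apply: eqs_mul => //; apply: id_b.
apply: (@eqs_trans n _ (Fr 2 n ^+ 3 * Fr 12 n)).
  by apply: eq_eqs; ring.
apply: (@eqs_trans n _ ((Tn n * Fr 1 n * Fr 4 n) * Fr 12 n)); last first.
  by apply: eq_eqs; ring.
by apply: eqs_mul => //; apply: eqs_sym; apply: id_a.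
Qed.

Lemma key_pond n : eqs n (Pp (fun j => odd j) n * Fp n) (Fr 3 n * Fr 4 n).
Proof.
apply: (@eqs_cancel n _ _ (Tn n * Fr 1 n)); first by rewrite coef0M Tn0 Fr0.
apply: (@eqs_trans n _ ((Pp (fun j => odd j) n * Tn n) * Fr 1 n * Fr 6 n * (Fr 2 n * Fr 2 n))).
  by apply: eq_eqs; rewrite /Fp; ring.
apply: (@eqs_trans n _ (Ep true n * Fr 1 n * Fr 6 n * (Fr 2 n * Fr 2 n))).
  apply: eqs_mul => //; apply: eqs_mul => //; apply: eqs_mul => //.
  rewrite (@Ep_c (fun j => odd j)); first exact: PpT.
  by move=> j; rewrite eqb_id.
apply: (@eqs_trans n _ ((Fr 2 n * Fr 3 n) * (Fr 2 n * Fr 2 n))).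
  by apply: eqs_mul => //; apply: id_c.
apply: (@eqs_trans n _ (Fr 2 n ^+ 3 * Fr 3 n)).
  by apply: eq_eqs; ring.
apply: (@eqs_trans n _ ((Tn n * Fr 1 n * Fr 4 n) * Fr 3 n)); last first.
  by apply: eq_eqs; ring.
by apply: eqs_mul => //; apply: eqs_sym; apply: id_a.
Qed.

Theorem theorem2p3 :
  (forall n : nat,
     (-1) ^+ n * (pend n)%:Z =
     smul (smul (feta 1) (feta 12))
          (sinv (smul (smul (feta 2) (feta 2)) (feta 6))) n) /\
  (forall n : nat,
     (-1) ^+ n * (pond n)%:Z =
     smul (smul (feta 3) (feta 4))
          (sinv (smul (smul (feta 2) (feta 2)) (feta 6))) n).
Proof.
split=> n.
- have -> : (-1) ^+ n * (pend n)%:Z = (Pp (fun j => ~~ odd j) n)`_n by rewrite Pp_coef.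
  symmetry; apply: (@final _ (Fr 1 n * Fr 12 n)); last exact: key_pend.
  by apply: agree_smul; apply: agree_feta.
- have -> : (-1) ^+ n * (pond n)%:Z = (Pp (fun j => odd j) n)`_n by rewrite Pp_coef.
  symmetry; apply: (@final _ (Fr 3 n * Fr 4 n)); last exact: key_pond.
  by apply: agree_smul; apply: agree_feta.
Qed.
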